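(* Let $(A,+,\cdot)$ be a left nilpotent pre-Lie ring of cardinality $p^n$ with $p>n+1$ prime, and let $\Omega:A\to A$ be the inverse of $W$, where $W(a)=e^{L_a}(1)-1$. Then there exist integers $\alpha_w$, only finitely many nonzero and not depending on $a$, such that for every $a\in A$, $$\Omega(a)=a+\sum_w\alpha_w\, w(a),$$ where $w$ ranges over non-associative monomials (words with a bracketing) of degree at least $2$ in one variable $x$, and $w(a)$ denotes the evaluation of $w$ at $x=a$ using the product $\cdot$ (e.g. if $w=x\cdot(x\cdot x)$ then $w(a)=a\cdot(a\cdot a)$).
   Context: A pre-Lie ring is an abelian group $(A,+)$ with a biadditive product $\cdot$ satisfying $(x\cdot y)\cdot z-x\cdot(y\cdot z)=(y\cdot x)\cdot z-y\cdot(x\cdot z)$. It is left nilpotent if $A^m=0$ for some $m$, where $A^1=A$ and $A^{i+1}$ is the additive subgroup generated by $a\cdot b$, $a\in A$, $b\in A^i$. Let $A^{\mathrm{id}}=A\times\mathbb Z$ with $(r,m)+(s,m')=(r+s,m+m')$, $(r,m)\cdot(s,m')=(r\cdot s+ms+m'r,mm')$; identify $A$ with $A\times\{0\}$, put $1=(0,1)$. For $a\in A$ let $L_a(x)=a\cdot x$ and $e^{L_a}(x)=\sum_{j\ge 0}\frac{1}{j!}L_a^j(x)$ (finite sum; the needed factorials are invertible modulo $p^n$). $W(a)=e^{L_a}(1)-1\in A$ is a bijection $A\to A$. *)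

(* Defs.v *)
From HB Require Import structures.
From mathcomp Require Import all_boot all_order all_algebra.
Set Implicit Arguments. Unset Strict Implicit. Unset Printing Implicit Defensive.
Import Order.TTheory GRing.Theory Num.Theory.
Local Open Scope ring_scope.

Inductive monomial : Type :=
| MX : monomial
| MMul : monomial -> monomial -> monomial.

Fixpoint monomial_eqb (u v : monomial) : bool :=
  match u, v with
  | MX, MX => true
  | MMul u1 u2, MMul v1 v2 => monomial_eqb u1 v1 && monomial_eqb u2 v2
  | _, _ => false
  end.

Lemma monomial_eqP : Equality.axiom monomial_eqb.
Proof.
elim=> [|u1 IH1 u2 IH2] [|v1 v2] /=; try by constructor.
case: (IH1 v1) => [->|h]; last by constructor; case.
case: (IH2 v2) => [->|h]; last by constructor; case.
by constructor.
Qed.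

HB.instance Definition _ := hasDecEq.Build monomial monomial_eqP.

Fixpoint mdeg (w : monomial) : nat :=
  match w with MX => 1%N | MMul u v => (mdeg u + mdeg v)%N end.

Section PreLie.
Variable A : finZmodType.
Variable mul : A -> A -> A.

Fixpoint meval (w : monomial) (a : A) : A :=
  match w with MX => a | MMul u v => mul (meval u a) (meval v a) end.

(* lpow i x  <->  x \in A^i  (A^1 = A, A^{i+1} = additive subgroup generated
   by the products a*b with a in A, b in A^i).  A^0 is empty (unused). *)
Inductive lpow : nat -> A -> Prop :=
| lpow1 x : lpow 1 x
| lpowS_mul i a b : lpow i.+1 b -> lpow i.+2 (mul a b)
| lpowS_0 i : lpow i.+2 0
| lpowS_sub i x y : lpow i.+2 x -> lpow i.+2 y -> lpow i.+2 (x - y).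

Definition left_nilpotent : Prop :=
  exists m : nat, (0 < m)%N /\ forall x, lpow m x -> x = 0.

(* The ring A^id = A x Z *)
Definition idmul (u v : A * int) : A * int :=
  (mul u.1 v.1 + v.1 *~ u.2 + u.1 *~ v.2, u.2 * v.2).

Definition idone : A * int := (0, 1).

Definition Lid (a : A) (u : A * int) : A * int := idmul (a, 0) u.

Definition invfact (j : nat) : nat := val ((j`!%:R : 'Z_#|A|)^-1).

(* e^{L_a}(u) = sum_{j>=0} (1/j!) L_a^j(u).  For j >= 1, L_a^j(u) lies in
   A = A x {0}, so 1/j! acts on it as multiplication modulo #|A|.
   The sum is truncated at j = #|A|, beyond which all terms vanish for a
   left nilpotent A of order p^n (A^{n+1} = 0). *)
Definition expL (a : A) (u : A * int) : A * int :=
  (u.1 + \sum_(1 <= j < #|A|.+1) ((iter j (Lid a) u).1 *+ invfact j), u.2).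

Definition W (a : A) : A := (expL a idone).1 - idone.1.

End PreLie.

(* Main.v *)
Require Import Defs.
From HB Require Import structures.
From mathcomp Require Import all_boot all_order all_algebra all_fingroup.
Import Order.TTheory GRing.Theory Num.Theory.
Set Implicit Arguments. Unset Strict Implicit. Unset Printing Implicit Defensive.
Local Open Scope ring_scope.

Definition pol := seq (monomial * int).

Definition peval (A : finZmodType) (mul : A -> A -> A) (P : pol) (a : A) : A :=
  \sum_(x <- P) meval mul x.1 a *~ x.2.

Lemma addf_props (A B : zmodType) (f : A -> B)
  (fD : forall x y, f (x + y) = f x + f y) :
  [/\ f 0 = 0, (forall x k, f (x *~ k) = f x *~ k) &
      (forall (I : Type) (r : seq I) (F : I -> A),
          f (\sum_(i <- r) F i) = \sum_(i <- r) f (F i))].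
Proof.
have f0 : f 0 = 0.
  have h := fD 0 0; rewrite addr0 in h.
  by apply: (addrI (f 0)); rewrite addr0 -h.
have fN : forall x, f (- x) = - f x.
  by move=> x; apply: (addrI (f x)); rewrite -fD !subrr.
have fn : forall x n, f (x *+ n) = f x *+ n.
  by move=> x; elim=> [|n IH]; rewrite ?mulr0n // !mulrS fD IH.
split=> //.
  move=> x [] n.
    by rewrite -!pmulrn fn.
  by rewrite !NegzE !mulrNz fN -!pmulrn fn.
move=> I; elim=> [|i r IH] F; first by rewrite !big_nil.
by rewrite !big_cons fD IH.
Qed.

Fixpoint mulP (P Q : pol) : pol :=
  match P with
  | [::] => [::]
  | x :: P' => map (fun y => (MMul x.1 y.1, x.2 * y.2)) Q ++ mulP P' Q
  end.

Fixpoint substM (w : monomial) (Q : pol) : pol :=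
  match w with
  | MX => Q
  | MMul u v => mulP (substM u Q) (substM v Q)
  end.

Definition scaleP (k : int) (P : pol) : pol := map (fun y => (y.1, y.2 * k)) P.

Fixpoint compP (P Q : pol) : pol :=
  match P with
  | [::] => [::]
  | x :: P' => scaleP x.2 (substM x.1 Q) ++ compP P' Q
  end.

Definition idP : pol := [:: (MX, 1)].
Definition gmap (A : finZmodType) (mul : A -> A -> A) (P : pol) (a : A) := a + peval mul P a.
Definition gcomp (P Q : pol) : pol := Q ++ compP P (idP ++ Q).

Notation degge k P := (all (fun x : monomial * int => (k <= mdeg x.1)%N) P).

Lemma peval_cat (A : finZmodType) (mul : A -> A -> A) P Q a :
  peval mul (P ++ Q) a = peval mul P a + peval mul Q a.
Proof. by rewrite /peval big_cat. Qed.

Lemma peval_mulP (A : finZmodType) (mul : A -> A -> A)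
  (mulDl : forall x y z : A, mul (x + y) z = mul x z + mul y z)
  (mulDr : forall x y z : A, mul x (y + z) = mul x y + mul x z) P Q a :
  peval mul (mulP P Q) a = mul (peval mul P a) (peval mul Q a).
Proof.
elim: P => [|x P IH] /=.
  rewrite /peval big_nil.
  by case: (addf_props (fun u => mulDl u ^~ (peval mul Q a))).
rewrite peval_cat IH /peval big_cons mulDl; congr (_ + _).
rewrite big_map.
case: (addf_props (fun u => mulDl u ^~ (\sum_(x0 <- Q) meval mul x0.1 a *~ x0.2))) => _ hz _.
rewrite hz.
case: (addf_props (mulDr (meval mul x.1 a))) => _ hz' hs.
rewrite hs mulrz_suml; apply: eq_bigr => y _ /=.
by rewrite hz' mulrC mulrzA.
Qed.

Lemma peval_substM (A : finZmodType) (mul : A -> A -> A)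
  (mulDl : forall x y z : A, mul (x + y) z = mul x z + mul y z)
  (mulDr : forall x y z : A, mul x (y + z) = mul x y + mul x z) w Q a :
  peval mul (substM w Q) a = meval mul w (peval mul Q a).
Proof.
elim: w => [|u IHu v IHv] //=.
by rewrite peval_mulP // IHu IHv.
Qed.

Lemma peval_scaleP (A : finZmodType) (mul : A -> A -> A) k P a :
  peval mul (scaleP k P) a = peval mul P a *~ k.
Proof.
rewrite /peval /scaleP big_map mulrz_suml; apply: eq_bigr => y _ /=.
by rewrite mulrzA.
Qed.

Lemma peval_compP (A : finZmodType) (mul : A -> A -> A)
  (mulDl : forall x y z : A, mul (x + y) z = mul x z + mul y z)
  (mulDr : forall x y z : A, mul x (y + z) = mul x y + mul x z) P Q a :
  peval mul (compP P Q) a = peval mul P (peval mul Q a).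
Proof.
elim: P => [|x P IH] /=; first by rewrite /peval !big_nil.
rewrite peval_cat IH peval_scaleP peval_substM //.
by rewrite [in RHS]/peval big_cons.
Qed.

Lemma peval_idP (A : finZmodType) (mul : A -> A -> A) a : peval mul idP a = a.
Proof. by rewrite /peval big_cons big_nil addr0 /=. Qed.

Lemma gmap_comp (A : finZmodType) (mul : A -> A -> A)
  (mulDl : forall x y z : A, mul (x + y) z = mul x z + mul y z)
  (mulDr : forall x y z : A, mul x (y + z) = mul x y + mul x z) P Q a :
  gmap mul P (gmap mul Q a) = gmap mul (gcomp P Q) a.
Proof.
rewrite /gmap /gcomp !peval_cat peval_compP // peval_cat peval_idP.
by rewrite addrA.
Qed.

Lemma degge_mulP i j P Q : degge i P -> degge j Q -> degge (i + j) (mulP P Q).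
Proof.
elim: P => [|x P IH] //= /andP[hx hP] hQ.
rewrite all_cat IH // andbT all_map.
apply/allP => y yQ /=; rewrite leq_add //.
by move/allP: hQ => /(_ y yQ).
Qed.

Lemma degge_substM w Q : degge 1 Q -> degge (mdeg w) (substM w Q).
Proof. by move=> hQ; elim: w => [|u IHu v IHv] //=; apply: degge_mulP. Qed.

Lemma degge_mono i j P : (i <= j)%N -> degge j P -> degge i P.
Proof. by move=> hij; apply: sub_all => x /= /(leq_trans hij). Qed.

Lemma degge_compP P Q : degge 2 P -> degge 1 Q -> degge 2 (compP P Q).
Proof.
move=> + hQ; elim: P => [|x P IH] //= /andP[hx hP].
rewrite all_cat IH // andbT /scaleP all_map.
by apply: (degge_mono hx); apply: degge_substM.
Qed.

Lemma degge_gcomp P Q : degge 2 P -> degge 2 Q -> degge 2 (gcomp P Q).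
Proof.
move=> hP hQ; rewrite /gcomp all_cat hQ /=.
by apply: degge_compP => //=; apply: degge_mono hQ.
Qed.

Definition rmon (j : nat) : monomial := iter j.-1 (MMul MX) MX.

Lemma mdeg_rmon j : (0 < j)%N -> mdeg (rmon j) = j.
Proof.
case: j => // j _; rewrite /rmon /=.
by elim: j => //= j ->.
Qed.

Definition P0 (A : finZmodType) : pol :=
  map (fun j => (rmon j, Posz (invfact A j))) (index_iota 2 #|A|.+1).

Lemma degge_P0 A : degge 2 (P0 A).
Proof.
rewrite /P0 all_map; apply/allP => j; rewrite mem_index_iota => /andP[h2 _] /=.
by rewrite mdeg_rmon // (leq_trans _ h2).
Qed.

Lemma iter_Lid (A : finZmodType) (mul : A -> A -> A)
  (mulDr : forall x y z : A, mul x (y + z) = mul x y + mul x z) a j :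
  iter j.+1 (Lid mul a) (0 : A, 1 : int) = (meval mul (rmon j.+1) a, 0).
Proof.
have m0 : mul a 0 = 0 by case: (addf_props (mulDr a)).
elim: j => [|j IH].
  by rewrite /= /Lid /idmul /= m0 mulr0z !add0r mulr1z mul0r.
rewrite iterS IH /Lid /idmul /= mulr0z !addr0 mul0r.
by [].
Qed.

Lemma invfact1 A : invfact A 1 = 1%N.
Proof. by rewrite /invfact /= invr1. Qed.

Lemma W_gmap (A : finZmodType) (mul : A -> A -> A)
  (mulDr : forall x y z : A, mul x (y + z) = mul x y + mul x z) a :
  W mul a = gmap mul (P0 A) a.
Proof.
rewrite /W /expL /idone /= subr0 add0r /gmap.
have cA : (0 < #|A|)%N by apply/card_gt0P; exists 0.
rewrite big_ltn ?ltnS // iter_Lid // invfact1 mulr1n /=.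
congr (_ + _).
rewrite /peval /P0 big_map; apply: eq_big_seq => j; rewrite mem_index_iota.
case: j => [|j] // _.
by rewrite iter_Lid // -pmulrn.
Qed.

Lemma regroup (A : finZmodType) (mul : A -> A -> A) (P : pol) :
  degge 2 P ->
  exists (alpha : monomial -> int) (s : seq monomial),
    [/\ uniq s,
        (forall w, alpha w != 0 -> w \in s),
        (forall w, w \in s -> (2 <= mdeg w)%N) &
        forall a : A, peval mul P a = \sum_(w <- s) (meval mul w a) *~ alpha w].
Proof.
move=> hP.
exists (fun w => \sum_(x <- P | x.1 == w) x.2), (undup (map fst P)).
split; first exact: undup_uniq.
- move=> w; apply: contraR; rewrite mem_undup => hw.
  rewrite big1_seq //= => x /andP[/eqP e xP].
  by case/negP: hw; rewrite -e; apply: map_f.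
- move=> w; rewrite mem_undup => /mapP[x xP ->].
  by move/allP: hP => /(_ x xP).
move=> a.
under eq_bigr => w _ do rewrite mulrz_sumr big_mkcond.
rewrite exchange_big /peval; apply: eq_big_seq => x xP /=.
have xs : x.1 \in undup (map fst P) by rewrite mem_undup map_f.
rewrite (bigD1_seq x.1) //= ?undup_uniq // eqxx big1 ?addr0 //.
by move=> w /negbTE; rewrite eq_sym => ->.
Qed.

Theorem lemma10 (A : finZmodType) (mul : A -> A -> A) (p n : nat)
  (mulDl : forall x y z : A, mul (x + y) z = mul x z + mul y z)
  (mulDr : forall x y z : A, mul x (y + z) = mul x y + mul x z)
  (prelie : forall x y z : A,
     mul (mul x y) z - mul x (mul y z) = mul (mul y x) z - mul y (mul x z))
  (lnil : left_nilpotent mul)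
  (p_prime : prime p) (cardA : #|A| = (p ^ n)%N) (p_big : (n.+1 < p)%N)
  (Omega : A -> A)
  (OmegaK : cancel Omega (W mul)) (WK : cancel (W mul) Omega) :
  exists (alpha : monomial -> int) (s : seq monomial),
    [/\ uniq s,
        (forall w, alpha w != 0 -> w \in s),
        (forall w, w \in s -> (2 <= mdeg w)%N) &
        forall a : A, Omega a = a + \sum_(w <- s) (meval mul w a) *~ alpha w].
Proof.
have iterW : forall k, exists Q, degge 2 Q /\ forall a, iter k (W mul) a = gmap mul Q a.
  elim=> [|k [Q [hQ eQ]]].
    by exists [::]; split=> // a; rewrite /gmap /peval big_nil addr0.
  exists (gcomp (P0 A) Q); split; first by apply: degge_gcomp => //; apply: degge_P0.
  by move=> a; rewrite iterS eQ W_gmap // gmap_comp.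
pose s := perm (can_inj WK).
have hm : forall a, iter #[s]%g (W mul) a = a.
  move=> a; have := expg_order s => /(congr1 (fun t : {perm A} => t a)).
  rewrite permX perm1 => e; rewrite -[RHS]e.
  by apply: eq_iter => x; rewrite permE.
have m0 : (0 < #[s])%g%N := order_gt0 s.
have [Q [hQ eQ]] := iterW (#[s]%g).-1.
have [alpha [t [h1 h2 h3 h4]]] := regroup mul hQ.
exists alpha, t; split=> // a.
rewrite -h4 -/(gmap mul Q a) -eQ.
by rewrite -{1}(hm a) -(prednK m0) iterS WK.
Qed.
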